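(* Let $\mathbf i,\mathbf i'\in I^{(\infty)}$ be related by a 4-move $\mathbf i'=\eta_k\mathbf i$ for some $k\in\mathbb N$. Then $$\widetilde B^{\mathbf i'}=\sigma_{k+2}\sigma_k\,\mu_k\mu_{k+1}\mu_k\,\widetilde B^{\mathbf i},$$ i.e. applying to $\widetilde B^{\mathbf i}$ the mutations in directions $k$, then $k+1$, then $k$, and then the permutations $\sigma_k$ and $\sigma_{k+2}$, yields $\widetilde B^{\mathbf i'}$.
   Context: Let $\mathfrak g$ be a complex finite-dimensional simple Lie algebra with index set $I$, Cartan matrix $\mathsf C=(\mathsf c_{i,j})_{i,j\in I}$, simple roots $\alpha_i$, fundamental weights $\varpi_i$, Weyl group $W$ generated by simple reflections $s_i$, and $W$-invariant symmetric bilinear form $(\cdot,\cdot)$ on the weight lattice with $(\alpha_i,\alpha_j)=\mathsf d_i\mathsf c_{i,j}$, where $\mathrm{diag}(\mathsf d_i)$ is the minimal positive integral left symmetrizer of $\mathsf C$. Write $\mathbb N=\{1,2,\dots\}$, $[a]_+=\max(a,0)$. $I^{(\infty)}$ is the set of sequences $\mathbf i=(i_u)_{u\in\mathbb N}\in I^{\mathbb N}$ in which every element of $I$ occurs infinitely often. For $u\in\mathbb N$: $u^+=u^+_{\mathbf i}=\min\{v>u:i_v=i_u\}$, $u^-=u^-_{\mathbf i}=\max(\{v<u:i_v=i_u\}\cup\{0\})$, $w_u=w^{\mathbf i}_u=s_{i_1}\cdots s_{i_u}$. The exchange matrix $\widetilde B^{\mathbf i}=(b_{u,v})_{u,v\in\mathbb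 N}$: $b_{u,v}=1$ if $v=u^+$; $-1$ if $v=u^-$; $\mathsf c_{i_u,i_v}$ if $u<v<u^+<v^+$; $-\mathsf c_{i_u,i_v}$ if $v<u<v^+<u^+$; $0$ otherwise. The skew-symmetric matrix $\Lambda^{\mathbf i}$: $\Lambda_{u,v}=-\Lambda_{v,u}=(\varpi_{i_u}-w_u\varpi_{i_u},\varpi_{i_v}+w_v\varpi_{i_v})$ for $u\le v$. Mutation: for $k\in\mathbb N$, $\mu_k(\Lambda,\widetilde B)=(E^T\Lambda E,E\widetilde BF)$ where, with $\widetilde B=(b_{u,v})$, $e_{u,v}=\delta_{u,v}$ ($v\neq k$), $e_{k,k}=-1$, $e_{u,k}=[-b_{u,k}]_+$ ($u\ne k$); $f_{u,v}=\delta_{u,v}$ ($u\ne k$), $f_{k,k}=-1$, $f_{k,v}=[b_{k,v}]_+$ ($v\ne k$). For a permutation $\pi$ of $\mathbb N$, $(\pi\Lambda)_{u,v}=\Lambda_{\pi^{-1}(u),\pi^{-1}(v)}$, $(\pi\widetilde B)_{u,v}=b_{\pi^{-1}(u),\pi^{-1}(v)}$; $\sigma_k$ is the transposition of $k$ and $k+1$. Composites of operators act right to left, each mutation using the exchange matrix produced by the previous steps. A 4-move: $\mathbf i'=\eta_k\mathbf i$ means $i_k=i_{k+2}=i'_{k+1}=i'_{k+3}$, $i_{k+1}=i_{k+3}=i'_k=i'_{k+2}$, $i_u=i'_u$ for $u\notin[k,k+3]$, and $\mathsf c_{i_{k+1},i_k}\mathsf c_{i_k,i_{k+1}}=2$.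 *)

(* Defs.v *)
From mathcomp Require Import all_boot all_order all_algebra.
Set Implicit Arguments. Unset Strict Implicit. Unset Printing Implicit Defensive.
Import Order.TTheory GRing.Theory Num.Theory.
Local Open Scope ring_scope.

(* Cartan matrices of complex finite-dimensional simple Lie algebras:  *)
(* indecomposable symmetrizable generalized Cartan matrices whose      *)
(* symmetrization is positive definite (finite type), index set I a    *)
(* nonempty finite type.                                               *)
Definition simple_cartan (I : finType) (C : I -> I -> int) : Prop :=
  [/\ #|I| != 0%N, (forall i, C i i = 2) /\
      (forall i j, i != j -> C i j <= 0),
      (forall i j, C i j = 0 <-> C j i = 0),
      (forall J : {set I}, J != set0 -> J != setT ->
          exists j k, [/\ j \in J, k \notin J & C j k != 0])
    & exists d : I -> int,
        [/\ (forall i, 0 < d i),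
            (forall i j, d i * C i j = d j * C j i)
          & forall x : I -> rat, (exists i, x i != 0) ->
              0 < \sum_i \sum_j x i * (d i * C i j)%:~R * x j]].

(* I^(infty): sequences indexed by N = {1,2,...} (the value at 0 is     *)
(* irrelevant) in which every element of I occurs infinitely often.    *)
Record seqinf (I : finType) := SeqInf {
  sq :> nat -> I;
  sq_inf : forall (a : I) (n : nat), exists v, (n < v)%N /\ sq v = a }.

Lemma uplus_ex (I : finType) (i : seqinf I) (u : nat) :
  exists v, (u < v)%N && (i v == i u).
Proof.
case: (sq_inf i (i u) u) => v [h1 h2]; exists v; by rewrite h1 h2 eqxx.
Qed.

Definition uplus (I : finType) (i : seqinf I) (u : nat) : nat :=
  ex_minn (uplus_ex i u).

(* u^- = max ({v < u : i_v = i_u} U {0}) ; v = 0 contributes 0 *)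
Definition uminus (I : finType) (i : seqinf I) (u : nat) : nat :=
  (\max_(v < u | i v == i u) (v : nat))%N.

Definition Bmat (I : finType) (C : I -> I -> int) (i : seqinf I)
  (u v : nat) : int :=
  if v == uplus i u then 1
  else if v == uminus i u then -1
  else if [&& (u < v)%N, (v < uplus i u)%N & (uplus i u < uplus i v)%N]
    then C (i u) (i v)
  else if [&& (v < u)%N, (u < uplus i v)%N & (uplus i v < uplus i u)%N]
    then - C (i u) (i v)
  else 0.

Definition mutE (k : nat) (B : nat -> nat -> int) (u x : nat) : int :=
  if x != k then (u == x)%:Z
  else if u == k then -1 else Num.max 0 (- B u k).

Definition mutF (k : nat) (B : nat -> nat -> int) (y v : nat) : int :=
  if y != k then (y == v)%:Z
  else if v == k then -1 else Num.max 0 (B k v).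

(* (E B F)_{u,v} = sum_{x,y in N} e_{u,x} b_{x,y} f_{y,v}.  Since
   e_{u,x} = 0 unless x in {u,k} and f_{y,v} = 0 unless y in {v,k},
   all nonzero terms have x <= max(u,k) and y <= max(v,k), so the
   truncated sum below is exactly the infinite matrix product. *)
Definition mut (k : nat) (B : nat -> nat -> int) (u v : nat) : int :=
  \sum_(1 <= x < (maxn u k).+1) \sum_(1 <= y < (maxn v k).+1)
     mutE k B u x * B x y * mutF k B y v.

Definition transp (k u : nat) : nat :=
  if u == k then k.+1 else if u == k.+1 then k else u.

(* (pi B)_{u,v} = b_{pi^{-1} u, pi^{-1} v} with pi = sigma_k *)
Definition permB (k : nat) (B : nat -> nat -> int) (u v : nat) : int :=
  B (transp k u) (transp k v).

Definition four_move (I : finType) (C : I -> I -> int) (k : nat)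
  (i i' : nat -> I) : Prop :=
  [/\ i k = i k.+2 /\ i k.+2 = i' k.+1 /\ i' k.+1 = i' k.+3,
      i k.+1 = i k.+3 /\ i k.+3 = i' k /\ i' k = i' k.+2,
      (forall u, (u < k)%N || (k.+3 < u)%N -> i u = i' u)
    & C (i k.+1) (i k) * C (i k) (i k.+1) = 2].

(* Main.v *)
Require Import Defs.
From mathcomp Require Import all_boot all_order all_algebra zify ring.
Set Implicit Arguments. Unset Strict Implicit. Unset Printing Implicit Defensive.
Import Order.TTheory GRing.Theory Num.Theory.
Local Open Scope ring_scope.

Section Up.
Variables (I : finType) (i : seqinf I).

Lemma up_spec u : [/\ (u < uplus i u)%N, i (uplus i u) = i u &
   forall w, (u < w)%N -> i w = i u -> (uplus i u <= w)%N].
Proof.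
rewrite /uplus; case: ex_minnP => m /andP[h1 /eqP h2] h3; split => // w hw e.
by apply: h3; rewrite hw e eqxx.
Qed.

Lemma up_gt u : (u < uplus i u)%N. Proof. by case: (up_spec u). Qed.
Lemma up_eq u : i (uplus i u) = i u. Proof. by case: (up_spec u). Qed.
Lemma up_min u w : (u < w)%N -> (w < uplus i u)%N -> i w != i u.
Proof.
move=> h1 h2; apply/eqP => e; case: (up_spec u) => _ _ /(_ w h1 e); lia.
Qed.

Lemma up_char u w : (u < w)%N -> i w = i u ->
  (forall z, (u < z)%N -> (z < w)%N -> i z != i u) -> uplus i u = w.
Proof.
move=> h1 h2 h3; case: (up_spec u) => a b /(_ w h1 h2) c.
apply/eqP; rewrite eqn_leq c /=; rewrite leqNgt; apply/negP => lt.
by move: (h3 _ a lt); rewrite b eqxx.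
Qed.

Lemma up_inj u v : uplus i u = uplus i v -> u = v.
Proof.
move=> e; have ei : i u = i v by rewrite -up_eq e up_eq.
case: (ltngtP u v) => // h.
- by move: (up_min (w:=v) h); rewrite e up_gt ei eqxx => /(_ isT).
- by move: (up_min (w:=u) h); rewrite -e up_gt ei eqxx => /(_ isT).
Qed.

Lemma uminus_up u v : (1 <= v)%N -> (v == uminus i u) = (u == uplus i v).
Proof.
move=> v1; apply/idP/idP.
- move/eqP => ev.
  have [A0|Apos] := posnP #|[pred z : 'I_u | i z == i u]|.
    rewrite /uminus big_pred0 in ev; first by lia.
    by move=> z; apply/negP=> hz; move: A0 => /card0_eq /(_ z); rewrite inE hz.
  case: (eq_bigmax_cond (fun z : 'I_u => (z : nat)) Apos) => z /= /eqP hz hm.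
  rewrite /uminus hm in ev; subst v.
  apply/eqP; symmetry; apply: up_char => //.
  move=> w h1 h2; apply/negP => /eqP e.
  have : (w <= \max_(v0 < u | i v0 == i u) v0)%N.
    have := @leq_bigmax_cond _ (fun v0 : 'I_u => i v0 == i u) (fun v0 => (v0:nat)) (Ordinal h2).
    by rewrite /= e hz eqxx => /(_ isT).
  have hm' : (\max_(v0 < u | i v0 == i u) v0 = z)%N := hm.
  rewrite hm'; lia.
- move/eqP => eu; subst u; rewrite eqn_leq; apply/andP; split.
    have hv : i v == i (uplus i v) by rewrite up_eq.
    exact: (@leq_bigmax_cond _ (fun v0 : 'I_(uplus i v) => i v0 == i (uplus i v)) (fun v0 => (v0:nat)) (Ordinal (up_gt v)) hv).
  apply/bigmax_leqP => z /eqP hz; rewrite leqNgt; apply/negP => lt.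
  by move: (up_min lt (ltn_ord z)); rewrite hz up_eq eqxx.
Qed.

End Up.
Definition mutf (T : eqType) (m : T) (X : T -> T -> int) (u v : T) : int :=
  if u == m then (if v == m then X m m else - X m v - X m m * Num.max 0 (X m v))
  else if v == m then - X u m - Num.max 0 (- X u m) * X m m
  else X u v + X u m * Num.max 0 (X m v) + Num.max 0 (- X u m) * X m v
       + Num.max 0 (- X u m) * X m m * Num.max 0 (X m v).

Lemma sum_delta n a (g : nat -> int) :
  \sum_(1 <= x < n) (if x == a then g x else 0) =
  if (1 <= a < n)%N then g a else 0.
Proof.
elim: n => [|n IH]; first by rewrite big_geq //; case: ifPn => // /andP[]; lia.
case: (leqP 1 n) => hn.
  rewrite big_nat_recr //= IH.
  case: (eqVneq n a) => [<-|na].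
    rewrite ifN; last by lia.
    by rewrite add0r ifT //; lia.
  rewrite addr0; case: ifPn; case: ifPn => //; lia.
rewrite big_geq; last by lia.
case: ifPn => // /andP[]; lia.
Qed.

Lemma sum_delta_in n a (g : nat -> int) : (1 <= a < n)%N ->
  \sum_(1 <= x < n) (if x == a then g x else 0) = g a.
Proof. by move=> h; rewrite sum_delta h. Qed.

Lemma mut_mutf k B u v : (1 <= k)%N -> (1 <= u)%N -> (1 <= v)%N ->
  mut k B u v = mutf k B u v.
Proof.
move=> k1 u1 v1; rewrite /mut.
have hE x : mutE k B u x = (if x == u then (u != k)%:Z else 0) + (if x == k then (if u == k then -1 else Num.max 0 (- B u k)) else 0).
  rewrite /mutE; have [->|xk] := eqVneq x k => /=.
    by rewrite (eq_sym k u); case: eqP => _; rewrite add0r.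
  by rewrite addr0 (eq_sym x u); case: eqP => [->|]; rewrite ?xk.
have hF y : mutF k B y v = (if y == v then (v != k)%:Z else 0) + (if y == k then (if v == k then -1 else Num.max 0 (B k v)) else 0).
  rewrite /mutF; have [->|yk] := eqVneq y k => /=.
    by rewrite (eq_sym k v); case: eqP => _; rewrite add0r.
  by rewrite addr0; case: eqP => [<-|]; rewrite ?yk.
have inner x : \sum_(1 <= y < (maxn v k).+1) mutE k B u x * B x y * mutF k B y v =
   mutE k B u x * (B x v * (v != k)%:Z + B x k * (if v == k then -1 else Num.max 0 (B k v))).
  rewrite (eq_bigr (fun y => mutE k B u x * (B x y * mutF k B y v))); last by move=> y _; rewrite mulrA.
  rewrite -mulr_sumr; congr (_ * _).
  under eq_bigr => y _ do rewrite hF mulrDr.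
  rewrite big_split /=.
  have e1 : \sum_(1 <= y < (maxn v k).+1) B x y * (if y == v then (v != k)%:Z else 0)
     = \sum_(1 <= y < (maxn v k).+1) (if y == v then B x y * (v != k)%:Z else 0).
    by apply: eq_bigr => y _; case: ifP => _; rewrite ?mulr0.
  have e2 : \sum_(1 <= y < (maxn v k).+1) B x y * (if y == k then (if v == k then -1 else Num.max 0 (B k v)) else 0)
     = \sum_(1 <= y < (maxn v k).+1) (if y == k then B x y * (if v == k then -1 else Num.max 0 (B k v)) else 0).
    by apply: eq_bigr => y _; case: ifP => _; rewrite ?mulr0.
  by rewrite e1 e2 !sum_delta_in //; lia.
under eq_bigr => x _ do rewrite inner hE mulrDl.
rewrite big_split /=.
have e1 : forall g : nat -> int, \sum_(1 <= x < (maxn u k).+1) (if x == u then (u != k)%:Z else 0) * g x = \sum_(1 <= x < (maxn u k).+1) (if x == u then (u != k)%:Z * g x else 0).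
  by move=> g; apply: eq_bigr => x _; case: ifP => _; rewrite ?mul0r.
have e2 : forall (c : int) (g : nat -> int), \sum_(1 <= x < (maxn u k).+1) (if x == k then c else 0) * g x = \sum_(1 <= x < (maxn u k).+1) (if x == k then c * g x else 0).
  by move=> c g; apply: eq_bigr => x _; case: ifP => _; rewrite ?mul0r.
rewrite e1 e2 !sum_delta_in; try lia.
rewrite /mutf; case: (eqVneq u k) => [->|uk]; case: (eqVneq v k) => [->|vk] /=; try ring.
Qed.
Definition piK (k x : nat) : nat := transp k (transp k.+2 x).
Definition exc (k z w : nat) : bool :=
  [|| (z == k) && (w == k.+1), (z == k.+1) && (w == k),
      (z == k.+2) && (w == k.+3) | (z == k.+3) && (w == k.+2)].

Lemma transpP k x : (x = k /\ transp k x = k.+1) \/ (x = k.+1 /\ transp k x = k) \/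
  (x <> k /\ x <> k.+1 /\ transp k x = x).
Proof.
rewrite /transp; case: (eqVneq x k) => [->|h1]; first by left.
case: (eqVneq x k.+1) => [->|h2]; first by right; left.
by right; right; split; [apply/eqP|split; [apply/eqP|]].
Qed.

Lemma piKP k x : (x = k /\ piK k x = k.+1) \/ (x = k.+1 /\ piK k x = k) \/
  (x = k.+2 /\ piK k x = k.+3) \/ (x = k.+3 /\ piK k x = k.+2) \/
  ((x < k \/ k.+3 < x)%N /\ piK k x = x).
Proof.
rewrite /piK; have := transpP k.+2 x; have := transpP k (transp k.+2 x); lia.
Qed.

Lemma piK_invol k x : piK k (piK k x) = x.
Proof. have := piKP k x; have := piKP k (piK k x); lia. Qed.
Lemma piK_lt k z w : ~~ exc k z w -> (piK k z < piK k w)%N = (z < w)%N.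
Proof. rewrite /exc => h; have := piKP k z; have := piKP k w; lia. Qed.

Lemma up_transport (I : finType) (i j : seqinf I) (f : nat -> nat) :
  (forall x, f (f x) = x) -> (forall z, j z = i (f z)) ->
  (forall x y, (x < y)%N -> i x = i y -> (f x < f y)%N) ->
  forall u, uplus j (f u) = f (uplus i u).
Proof.
move=> inv ej mono u.
have jfu : j (f u) = i u by rewrite ej inv.
apply: up_char.
- by apply: mono; [apply: up_gt | rewrite up_eq].
- by rewrite ej inv up_eq jfu.
move=> z h1 h2; apply/negP => /eqP e.
rewrite ej jfu in e.
have zz : z = f (f z) by rewrite inv.
case: (ltngtP (f z) u) => c.
- by move: (mono _ _ c e); rewrite inv; lia.
- case: (ltngtP (f z) (uplus i u)) => d.
  + by move: (up_min c d); rewrite e eqxx.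
  + have := mono _ _ d; rewrite up_eq -e inv => /(_ erefl); lia.
  + by move: h2; rewrite -d inv; lia.
- by move: h1; rewrite -c inv; lia.
Qed.

Definition Bg (lt : nat -> nat -> bool) (up : nat -> nat) (c : nat -> nat -> int)
  (x y : nat) : int :=
  if y == up x then 1 else if x == up y then -1
  else if [&& lt x y, lt y (up x) & lt (up x) (up y)] then c x y
  else if [&& lt y x, lt x (up y) & lt (up y) (up x)] then - c x y else 0.

Lemma Bmat_Bg (I : finType) (C : I -> I -> int) (i : seqinf I) x y : (1 <= y)%N ->
  Bmat C i x y = Bg (fun a b => (a < b)%N) (uplus i) (fun a b => C (i a) (i b)) x y.
Proof. by move=> y1; rewrite /Bmat /Bg uminus_up. Qed.

Lemma Bg_transfer lt1 up1 c1 lt2 up2 c2 (f : nat -> nat) x y :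
  let S := [:: x; y; up2 x; up2 y] in
  (forall z w, z \in S -> w \in S -> lt1 (f z) (f w) = lt2 z w) ->
  (forall z w, z \in S -> w \in S -> (f z == f w) = (z == w)) ->
  f (up2 x) = up1 (f x) -> f (up2 y) = up1 (f y) -> c1 (f x) (f y) = c2 x y ->
  Bg lt1 up1 c1 (f x) (f y) = Bg lt2 up2 c2 x y.
Proof.
move=> S hl he ux uy hc; rewrite /Bg -ux -uy hc.
have I1 : x \in S by rewrite !inE eqxx.
have I2 : y \in S by rewrite !inE eqxx ?orbT.
have I3 : up2 x \in S by rewrite !inE eqxx ?orbT.
have I4 : up2 y \in S by rewrite !inE eqxx ?orbT.
by rewrite !he // !hl.
Qed.
Definition posM (pq rs : bool) (z : nat) : nat :=
  match z with
  | 0 => if pq then 0 else 1 | 1 => if pq then 1 else 0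
  | 2 => 2 | 3 => 3 | 4 => 4 | 5 => 5
  | 6 => if rs then 6 else 7 | _ => if rs then 7 else 6 end%N.
Definition ltM pq rs z w := (posM pq rs z < posM pq rs w)%N.
Definition upM (z : nat) : nat :=
  match z with 0 => 2 | 1 => 3 | 2 => 4 | 3 => 5 | 4 => 6 | 5 => 7 | _ => 0 end%N.
Definition piM (z : nat) : nat :=
  match z with 2 => 3 | 3 => 2 | 4 => 5 | 5 => 4 | _ => z end%N.
Definition ltM2 pq rs z w := ltM pq rs (piM z) (piM w).
Definition cM (c1 c2 : int) (z w : nat) : int :=
  if odd z == odd w then 2 else if odd z then c2 else c1.

Definition fincheck (pq rs : bool) (c1 c2 : int) : bool :=
  all (fun a => all (fun b =>
    mutf 2%N (mutf 3%N (mutf 2%N (Bg (ltM pq rs) upM (cM c1 c2)))) a b ==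
    Bg (ltM2 pq rs) upM (cM c1 c2) a b) (iota 0 6)) (iota 0 6).

Lemma fincheck_ok pq rs : fincheck pq rs (-1) (-2) && fincheck pq rs (-2) (-1).
Proof. by case: pq; case: rs; vm_compute. Qed.

Lemma mutf_ext (m : nat) X Y u v : X u v = Y u v -> X u m = Y u m -> X m v = Y m v ->
  X m m = Y m m -> mutf m X u v = mutf m Y u v.
Proof. by move=> h1 h2 h3 h4; rewrite /mutf h1 h2 h3 h4. Qed.

Lemma mut3 k B u v : (1 <= k)%N -> (1 <= u)%N -> (1 <= v)%N ->
  mut k (mut k.+1 (mut k B)) u v = mutf k (mutf k.+1 (mutf k B)) u v.
Proof.
move=> k1 u1 v1.
have L1 a b : (1 <= a)%N -> (1 <= b)%N -> mut k B a b = mutf k B a b.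
  by move=> *; rewrite mut_mutf.
have L2 a b : (1 <= a)%N -> (1 <= b)%N -> mut k.+1 (mut k B) a b = mutf k.+1 (mutf k B) a b.
  by move=> a1 b1; rewrite mut_mutf //; apply: mutf_ext; apply: L1.
by rewrite mut_mutf //; apply: mutf_ext; apply: L2.
Qed.

Lemma row_fixed (m : nat) X u v : u != m -> X u m = 0 -> mutf m X u v = X u v.
Proof.
move=> um h; rewrite /mutf (negbTE um) h; case: eqP => [->|_]; rewrite ?h;
  rewrite /Num.max /=; rewrite ?ltxx ?oppr0 /=; ring.
Qed.

Lemma col_fixed (m : nat) X u v : v != m -> X m v = 0 -> mutf m X u v = X u v.
Proof.
move=> vm h; rewrite /mutf (negbTE vm) h; case: eqP => [->|_]; rewrite ?h;
  rewrite /Num.max /=; rewrite ?ltxx ?oppr0 /=; ring.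
Qed.

Lemma mutf_reindex (E : nat -> nat) (m : nat) X a b :
  (E a == E m) = (a == m) -> (E b == E m) = (b == m) ->
  mutf (E m) X (E a) (E b) = mutf m (fun a b => X (E a) (E b)) a b.
Proof. by move=> h1 h2; rewrite /mutf h1 h2. Qed.

Lemma level_reindex (E : nat -> nat) (V : pred nat) (m : nat) X Y :
  V m -> (forall z, V z -> (E z == E m) = (z == m)) ->
  (forall z w, V z -> V w -> X (E z) (E w) = Y z w) ->
  forall z w, V z -> V w -> mutf (E m) X (E z) (E w) = mutf m Y z w.
Proof.
move=> Vm he hX z w Vz Vw; rewrite mutf_reindex ?he //.
by apply: mutf_ext; apply: hX.
Qed.

Section Main.
Variables (I : finType) (C : I -> I -> int) (i i' : seqinf I) (k : nat).
Hypotheses (hC : simple_cartan C) (hk : (1 <= k)%N) (hm : four_move C k i i').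

Lemma Cdiag x : C x x = 2.
Proof. by case: hC => _ [h _] _ _ _. Qed.

Lemma Coff x y : x != y -> C x y <= 0.
Proof. by case: hC => _ [_ h] _ _ _; apply: h. Qed.

Lemma ab : i k != i k.+1.
Proof. by apply/eqP => e; case: hm => _ _ _; rewrite -e Cdiag => /eqP. Qed.

Lemma i2 : i k.+2 = i k.
Proof. by case: hm => [[]]. Qed.
Lemma i3 : i k.+3 = i k.+1.
Proof. by case: hm => _ [[]]. Qed.

Lemma ipi z : i' z = i (piK k z).
Proof.
case: hm => [[e1 [e2 e3]] [f1 [f2 f3]] out _].
case: (piKP k z) => [[-> ->]|[[-> ->]|[[-> ->]|[[-> ->]|[h ->]]]]].
- by rewrite f1 f2.
- by rewrite e1 e2.
- by rewrite f2 f3.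
- by rewrite e2 e3.
- by rewrite out //; lia.
Qed.

Lemma mono x y : (x < y)%N -> i x = i y -> (piK k x < piK k y)%N.
Proof.
move=> lt e; case E: (exc k x y); last by rewrite piK_lt ?E.
move: E; rewrite /exc => /or4P [] /andP [/eqP ex /eqP ey]; subst; try lia.
- by move: ab; rewrite e eqxx.
- by move: ab; rewrite -i2 -i3 e eqxx.
Qed.

Lemma up' u : uplus i' (piK k u) = piK k (uplus i u).
Proof.
apply: up_transport; [exact: piK_invol | exact: ipi | exact: mono].
Qed.

Lemma upk : uplus i k = k.+2.
Proof.
apply: up_char => //; first by rewrite i2.
move=> z h1 h2; have -> : z = k.+1 by lia.
by rewrite eq_sym ab.
Qed.

Lemma upk1 : uplus i k.+1 = k.+3.
Proof.
apply: up_char => //; first by rewrite i3.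
move=> z h1 h2; have -> : z = k.+2 by lia.
by rewrite i2 ab.
Qed.

Lemma uminus_lt u : (1 <= u)%N -> (uminus i u < u)%N.
Proof.
move=> u1; have : (uminus i u <= u.-1)%N.
  by apply/bigmax_leqP => z _; have := ltn_ord z; lia.
lia.
Qed.

Definition pp := uminus i k.
Definition qq := uminus i k.+1.
Definition rr := uplus i k.+2.
Definition ss := uplus i k.+3.

Lemma up_p : (1 <= pp)%N -> uplus i pp = k.
Proof. by move=> h; apply/esym/eqP; rewrite -uminus_up. Qed.
Lemma up_q : (1 <= qq)%N -> uplus i qq = k.+1.
Proof. by move=> h; apply/esym/eqP; rewrite -uminus_up. Qed.

Lemma p_lt : (pp < k)%N.
Proof. exact: uminus_lt. Qed.
Lemma q_lt : (qq < k)%N.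
Proof.
have := uminus_lt (u:=k.+1) isT; rewrite -/qq => h.
case: (eqVneq qq k) => e; last by lia.
by have := up_q; rewrite e upk => /(_ hk) /eqP; lia.
Qed.

Lemma ip : (1 <= pp)%N -> i pp = i k.
Proof. by move=> h; rewrite -[in RHS](up_p h) up_eq. Qed.
Lemma iq : (1 <= qq)%N -> i qq = i k.+1.
Proof. by move=> h; rewrite -[in RHS](up_q h) up_eq. Qed.
Lemma ir : i rr = i k.
Proof. by rewrite /rr up_eq i2. Qed.
Lemma iss : i ss = i k.+1.
Proof. by rewrite /ss up_eq i3. Qed.

Lemma r_gt : (k.+3 < rr)%N.
Proof.
have := up_gt i k.+2; rewrite -/rr => h.
case: (eqVneq rr k.+3) => e; last by lia.
by move: ir; rewrite e i3 => /eqP; rewrite eq_sym (negbTE ab).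
Qed.
Lemma s_gt : (k.+3 < ss)%N.
Proof. by have := up_gt i k.+3; rewrite -/ss. Qed.
Lemma rs_ne : rr != ss.
Proof. by apply/eqP => /up_inj; lia. Qed.
Lemma pq_ne : (1 <= pp)%N -> pp != qq.
Proof.
move=> p1; apply/eqP => e; have q1 : (1 <= qq)%N by rewrite -e.
by move: (ip p1) (iq q1) ab; rewrite e => -> ->; rewrite eqxx.
Qed.

Definition inT x := [|| x == pp, x == qq | (k <= x <= k.+3)%N].

Lemma upT x : (1 <= x)%N -> (k <= uplus i x <= k.+3)%N -> inT x.
Proof.
move=> x1 h; rewrite /inT.
have [e|[e|[e|e]]] : uplus i x = k \/ uplus i x = k.+1 \/ uplus i x = k.+2 \/ uplus i x = k.+3 by lia.
- have hx : x == pp by rewrite /pp uminus_up // e.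
  by rewrite hx.
- have hx : x == qq by rewrite /qq uminus_up // e.
  by rewrite hx orbT.
- have -> : x = k by apply: (up_inj (i:=i)); rewrite e upk.
  by apply/orP; right; apply/orP; right; lia.
- have -> : x = k.+1 by apply: (up_inj (i:=i)); rewrite e upk1.
  by apply/orP; right; apply/orP; right; lia.
Qed.

Lemma notT x : (1 <= x)%N -> ~~ inT x ->
  ~~ (k <= x <= k.+3)%N /\ ~~ (k <= uplus i x <= k.+3)%N.
Proof.
move=> x1 h; split; apply/negP => h'; move/negP: h; apply.
  by rewrite /inT h' !orbT.
exact: upT.
Qed.

Lemma exc_up y : ~~ exc k y (uplus i y) && ~~ exc k (uplus i y) y.
Proof.
have h := up_gt i y; have e := up_eq i y.
apply/andP; split; apply/negP; rewrite /exc => /or4P [] /andP [/eqP e1 /eqP e2];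
  try lia; (first [rewrite e2 e1 in e | rewrite e1 e2 in e]); rewrite ?i2 ?i3 in e;
  first [by move: ab; rewrite e eqxx | by move: ab; rewrite -e eqxx].
Qed.

Definition cR (x y : nat) : int := C (i x) (i y).
Definition ltpi (z w : nat) : bool := (piK k z < piK k w)%N.
Definition ltn' (z w : nat) : bool := (z < w)%N.

Lemma excW z w : exc k z w -> (k <= z <= k.+3)%N && (k <= w <= k.+3)%N.
Proof. by rewrite /exc => /or4P [] /andP [/eqP -> /eqP ->]; apply/andP; split; lia. Qed.

Lemma BppB x y : (1 <= x)%N -> (1 <= y)%N -> ~~ inT x || ~~ inT y ->
  Bg ltpi (uplus i) cR x y = Bg ltn' (uplus i) cR x y.
Proof.
move=> x1 y1 h; symmetry.
have key : forall z w, z \in [:: x; y; uplus i x; uplus i y] ->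
    w \in [:: x; y; uplus i x; uplus i y] -> ~~ exc k z w.
  move=> z w hz hw; apply/negP => E; case/andP: (excW E) => Wz Ww.
  move: hz hw; rewrite !inE => /or4P [] /eqP Ez /or4P [] /eqP Ew; subst z w;
  case/orP: h => /(notT) [] // hW huW; move/andP: (exc_up y) => [n1 n2];
    move/andP: (exc_up x) => [n3 n4];
  first [ (clear E n1 n2 n3 n4; lia) | by move: n1; rewrite E | by move: n2; rewrite E
        | by move: n3; rewrite E | by move: n4; rewrite E
        | by move: E; rewrite /exc; clear n1 n2 n3 n4; lia ].
apply: (@Bg_transfer _ _ _ _ _ _ id) => //= z w hz hw.
by rewrite /ltpi /ltn' piK_lt // key.
Qed.

Lemma Bzero_col x m : (1 <= x)%N -> ~~ inT x -> (m == k) || (m == k.+1) ->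
  Bmat C i x m = 0.
Proof.
move=> x1 hx hm'; case: (notT x1 hx) => hW huW.
rewrite Bmat_Bg; last by lia.
have u1 := upk; have u2 := upk1.
rewrite /Bg; case/orP: hm' => /eqP ->; rewrite ?u1 ?u2;
  repeat (case: ifPn => ?); lia.
Qed.

Lemma Bzero_row y m : (1 <= y)%N -> ~~ inT y -> (m == k) || (m == k.+1) ->
  Bmat C i m y = 0.
Proof.
move=> y1 hy hm'; case: (notT y1 hy) => hW huW.
rewrite Bmat_Bg //.
have u1 := upk; have u2 := upk1.
rewrite /Bg; case/orP: hm' => /eqP ->; rewrite ?u1 ?u2;
  repeat (case: ifPn => ?); lia.
Qed.

Lemma MB x y : (1 <= x)%N -> (1 <= y)%N -> ~~ inT x || ~~ inT y ->
  mutf k (mutf k.+1 (mutf k (Bmat C i))) x y = Bmat C i x y.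
Proof.
move=> x1 y1; case/orP => h.
- have xk : x != k by apply/negP => /eqP e; move: h; rewrite /inT e; lia.
  have xk1 : x != k.+1 by apply/negP => /eqP e; move: h; rewrite /inT e; lia.
  have z0 : Bmat C i x k = 0 by apply: Bzero_col; rewrite ?eqxx.
  have z1 : Bmat C i x k.+1 = 0 by apply: Bzero_col; rewrite ?eqxx ?orbT.
  have r1 w : mutf k (Bmat C i) x w = Bmat C i x w by apply: row_fixed.
  have r2 w : mutf k.+1 (mutf k (Bmat C i)) x w = Bmat C i x w.
    by rewrite row_fixed // r1.
  by rewrite row_fixed // r2.
- have yk : y != k by apply/negP => /eqP e; move: h; rewrite /inT e; lia.
  have yk1 : y != k.+1 by apply/negP => /eqP e; move: h; rewrite /inT e; lia.
  have z0 : Bmat C i k y = 0 by apply: Bzero_row; rewrite ?eqxx.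
  have z1 : Bmat C i k.+1 y = 0 by apply: Bzero_row; rewrite ?eqxx ?orbT.
  have r1 w : mutf k (Bmat C i) w y = Bmat C i w y by apply: col_fixed.
  have r2 w : mutf k.+1 (mutf k (Bmat C i)) w y = Bmat C i w y.
    by rewrite col_fixed // r1.
  by rewrite col_fixed // r2.
Qed.

Definition E (z : nat) : nat :=
  match z with 0 => pp | 1 => qq | 2 => k | 3 => k.+1 | 4 => k.+2 | 5 => k.+3
  | 6 => rr | _ => ss end%N.
Definition V (z : nat) : bool := (z < 8)%N && ((2 <= z)%N || (1 <= E z)%N).
Definition pqb := (pp < qq)%N.
Definition rsb := (rr < ss)%N.
Definition c1 := C (i k) (i k.+1).
Definition c2 := C (i k.+1) (i k).

Lemma cases8 z : (z < 8)%N -> z = 0%N \/ z = 1%N \/ z = 2%N \/ z = 3%N \/ z = 4%N \/ z = 5%N \/ z = 6%N \/ z = 7%N.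
Proof. lia. Qed.

Ltac c8 H := case: (cases8 H) => [?|[?|[?|[?|[?|[?|[?|?]]]]]]]; subst.

Lemma F1 z w : V z -> V w -> (E z < E w)%N = ltM pqb rsb z w.
Proof.
move=> /andP [z8 vz] /andP [w8 vw].
have h1 := p_lt; have h2 := q_lt; have h3 := r_gt; have h4 := s_gt; have h5 := rs_ne.
have h6 : (1 <= pp)%N -> pp != qq := pq_ne.
rewrite /ltM /pqb /rsb.
move: vz vw; c8 z8; c8 w8; rewrite /E /posM /= => vz vw;
  case: (ltnP pp qq) => ?; case: (ltnP rr ss) => ?; lia.
Qed.


Lemma F2 z w : V z -> V w -> (E z == E w) = (z == w).
Proof.
move=> /andP [z8 vz] /andP [w8 vw].
have h1 := p_lt; have h2 := q_lt; have h3 := r_gt; have h4 := s_gt; have h5 := rs_ne.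
have h6 : (1 <= pp)%N -> pp != qq := pq_ne.
move: vz vw; c8 z8; c8 w8; rewrite /E /= => vz vw; lia.
Qed.

Lemma F3 z : (z < 6)%N -> V z -> E (upM z) = uplus i (E z).
Proof.
move=> z6 /andP [_ vz]; have z8 : (z < 8)%N by lia.
move: vz; c8 z8; rewrite /E /upM /= => vz; try lia.
- by rewrite up_p.
- by rewrite up_q.
- by rewrite upk.
- by rewrite upk1.
- by [].
- by [].
Qed.

Lemma letter z : V z -> i (E z) = if odd z then i k.+1 else i k.
Proof.
move=> /andP [z8 vz].
move: vz; c8 z8; rewrite /E /= => vz.
- by rewrite ip.
- by rewrite iq.
- by [].
- by [].
- by rewrite i2.
- by rewrite i3.
- by rewrite ir.
- by rewrite iss.
Qed.

Lemma F4 z w : V z -> V w -> cR (E z) (E w) = cM c1 c2 z w.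
Proof.
move=> vz vw; rewrite /cR /cM !letter //.
by case: (odd z); case: (odd w); rewrite /= ?Cdiag.
Qed.

Lemma F5 z : (z < 8)%N -> piK k (E z) = E (piM z).
Proof.
move=> z8; have h1 := p_lt; have h2 := q_lt; have h3 := r_gt; have h4 := s_gt.
c8 z8; rewrite /E /piM /=.
- by have := piKP k pp; lia.
- by have := piKP k qq; lia.
- by have := piKP k k; lia.
- by have := piKP k k.+1; lia.
- by have := piKP k k.+2; lia.
- by have := piKP k k.+3; lia.
- by have := piKP k rr; lia.
- by have := piKP k ss; lia.
Qed.

Lemma VpiM z : V z -> V (piM z).
Proof.
move=> /andP [z8 vz]; move: vz; c8 z8; rewrite /V /E /piM /= => vz; lia.
Qed.

Lemma VupM z : (z < 6)%N -> V (upM z).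
Proof.
move=> z6; have z8 : (z < 8)%N by lia.
c8 z8; rewrite /V /E /upM /=; lia.
Qed.

Lemma memS a b z : (a < 6)%N -> (b < 6)%N -> V a -> V b ->
  z \in [:: a; b; upM a; upM b] -> V z.
Proof.
move=> a6 b6 va vb; rewrite !inE => /or4P [] /eqP ->; rewrite ?VupM //.
Qed.

Lemma TabB a b : (a < 6)%N -> (b < 6)%N -> V a -> V b ->
  Bmat C i (E a) (E b) = Bg (ltM pqb rsb) upM (cM c1 c2) a b.
Proof.
move=> a6 b6 va vb; rewrite Bmat_Bg; last first.
  move/andP: vb => [b8 vb]; move: vb; rewrite /E; c8 b8; move=> /= vb; lia.
apply: Bg_transfer.
- by move=> z w hz hw; rewrite F1 //; apply: (memS a6 b6).
- by move=> z w hz hw; rewrite F2 //; apply: (memS a6 b6).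
- by rewrite F3.
- by rewrite F3.
- by rewrite -F4.
Qed.
Lemma Bpp x y : (1 <= y)%N -> Bmat C i' (piK k x) (piK k y) = Bg ltpi (uplus i) cR x y.
Proof.
move=> y1; rewrite Bmat_Bg; last by have := piKP k y; lia.
apply: Bg_transfer => //.
- by move=> z w _ _; rewrite (can_eq (piK_invol k)).
- by rewrite up'.
- by rewrite up'.
- by rewrite /cR !ipi !piK_invol.
Qed.

Lemma TabPP a b : (a < 6)%N -> (b < 6)%N -> V a -> V b ->
  Bg ltpi (uplus i) cR (E a) (E b) = Bg (ltM2 pqb rsb) upM (cM c1 c2) a b.
Proof.
move=> a6 b6 va vb; apply: Bg_transfer.
- move=> z w hz hw; have vz := memS a6 b6 va vb hz; have vw := memS a6 b6 va vb hw.
  have z8 : (z < 8)%N by case/andP: vz.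
  have w8 : (w < 8)%N by case/andP: vw.
  by rewrite /ltpi !F5 // F1 ?VpiM.
- by move=> z w hz hw; rewrite F2 //; apply: (memS a6 b6).
- by rewrite F3.
- by rewrite F3.
- by rewrite -F4.
Qed.

Lemma Mtab a b : (a < 6)%N -> (b < 6)%N -> V a -> V b ->
  mutf k (mutf k.+1 (mutf k (Bmat C i))) (E a) (E b) =
  mutf 2%N (mutf 3%N (mutf 2%N (Bg (ltM pqb rsb) upM (cM c1 c2)))) a b.
Proof.
move=> a6 b6 va vb.
pose V' z := (z < 6)%N && V z.
have V2 : V' 2%N by rewrite /V' /V /=; lia.
have V3 : V' 3%N by rewrite /V' /V /=; lia.
have he2 z : V' z -> (E z == E 2) = (z == 2%N).
  by case/andP => _ vz; rewrite F2 //; case/andP: V2.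
have he3 z : V' z -> (E z == E 3) = (z == 3%N).
  by case/andP => _ vz; rewrite F2 //; case/andP: V3.
have L0 z w : V' z -> V' w -> Bmat C i (E z) (E w) = Bg (ltM pqb rsb) upM (cM c1 c2) z w.
  by case/andP => ? ? /andP [? ?]; apply: TabB.
have L1 := level_reindex V2 he2 L0.
have L2 := level_reindex V3 he3 L1.
have L3 := level_reindex V2 he2 L2.
by apply: L3; rewrite /V' ?a6 ?b6.
Qed.

Lemma c12 : (c1 = -1 /\ c2 = -2) \/ (c1 = -2 /\ c2 = -1).
Proof.
have h1 : c1 <= 0 by apply: Coff; exact: ab.
have h2 : c2 <= 0 by apply: Coff; rewrite eq_sym; exact: ab.
have h : c1 * c2 = 2 by case: hm => _ _ _; rewrite /c1 /c2 mulrC.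
have h1' : c1 <= -1 by case: (c1 =P 0) h => [->|]; [rewrite mul0r|]; lia.
have h2' : c2 <= -1 by case: (c2 =P 0) h => [->|]; [rewrite mulr0|]; lia.
have : (c1 + 1) * (c2 + 1) >= 0 by nia.
have : (c1 + 2) * (c2 + 2) <= 0 by nia.
nia.
Qed.

Lemma inT_E x : (1 <= x)%N -> inT x -> exists a, [/\ (a < 6)%N, V a & x = E a].
Proof.
move=> x1; rewrite /inT => /or3P [/eqP ex|/eqP ex|h].
- by exists 0%N; split => //; rewrite /V /E /=; lia.
- by exists 1%N; split => //; rewrite /V /E /=; lia.
- have [->|[->|[->|->]]] : x = k \/ x = k.+1 \/ x = k.+2 \/ x = k.+3 by lia.
  + by exists 2%N; split => //; rewrite /V /E /=; lia.
  + by exists 3%N; split => //; rewrite /V /E /=; lia.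
  + by exists 4%N; split => //; rewrite /V /E /=; lia.
  + by exists 5%N; split => //; rewrite /V /E /=; lia.
Qed.

Lemma main u v : (1 <= u)%N -> (1 <= v)%N ->
  Bmat C i' u v = permB k.+2 (permB k (mut k (mut k.+1 (mut k (Bmat C i))))) u v.
Proof.
move=> u1 v1.
have -> : permB k.+2 (permB k (mut k (mut k.+1 (mut k (Bmat C i))))) u v =
  mut k (mut k.+1 (mut k (Bmat C i))) (piK k u) (piK k v) by [].
have x1 : (1 <= piK k u)%N by have := piKP k u; lia.
have y1 : (1 <= piK k v)%N by have := piKP k v; lia.
rewrite -{1}(piK_invol k u) -{1}(piK_invol k v).
move: x1 y1; set x := piK k u; set y := piK k v => x1 y1.
rewrite Bpp // mut3 //.
case T: (inT x && inT y).
- case/andP: T => tx ty.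
  case: (inT_E x1 tx) => a [a6 va ->].
  case: (inT_E y1 ty) => b [b6 vb ->].
  rewrite TabPP // Mtab //.
  have fc : fincheck pqb rsb c1 c2.
    by case: c12 => [[-> ->]|[-> ->]]; case/andP: (fincheck_ok pqb rsb).
  move: fc; rewrite /fincheck => /allP H.
  have ha : a \in iota 0 6 by rewrite mem_iota.
  have hb : b \in iota 0 6 by rewrite mem_iota.
  by move: (H a ha) => /allP /(_ b hb) /eqP.
- rewrite BppB //; last by rewrite -negb_and T.
  by rewrite MB ?Bmat_Bg // -negb_and T.
Qed.

End Main.

Theorem lemma3p4 (I : finType) (C : I -> I -> int) (i i' : seqinf I) (k : nat) :
  simple_cartan C ->
  (1 <= k)%N ->
  four_move C k i i' ->
  forall u v : nat, (1 <= u)%N -> (1 <= v)%N ->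
    Bmat C i' u v =
    permB k.+2 (permB k (mut k (mut k.+1 (mut k (Bmat C i))))) u v.
Proof. by move=> hC hk hm u v u1 v1; apply: main. Qed.
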